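(* Let $\langle S_1\rangle$ be a good simplex and let $\langle S'\rangle$ be a codimension-one face of $\langle S_1\rangle$ which is not a face of $\Delta_0$. Then $\langle S'\rangle$ is a face of exactly one other good simplex $\langle S_2\rangle$, and $\langle S_1\rangle\cap\langle S_2\rangle=\langle S_1\cap S_2\rangle$.
   Context: Let $k\ge2$, $n=2k-1$, $e_1,\dots,e_k$ the standard basis of $\mathbb R^k$, $r_{(k)}=(r,\dots,r)\in\mathbb R^k$. In $\mathbb R^{2k}$ set $A_j=(e_j,0_{(k)})$, $B_j=\frac1{2n}(2_{(k)}-e_j,2_{(k)}-e_j)$, $C_j=(0_{(k)},e_j)$ for $j=1,\dots,k$; $A,B,C$ the corresponding $k$-element sets and $X=A\cup B\cup C$. $\langle\cdot\rangle$ denotes convex hull. $\Delta_0=\langle A\cup C\rangle$ is the standard simplex. A $2k$-element subset $S\subset X$ is good if it contains no set $\{A_j,B_j,C_j\}$ and $S\ne A\cup C$; a good simplex is $\langle S\rangle$ for a good set $S$ (these are $n$-simplices since good sets are bases of $\mathbb R^{2k}$). *)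

(* Defs.v *)
From HB Require Import structures.
From mathcomp Require Import all_boot all_order all_algebra.
From mathcomp Require Import boolp classical_sets reals.
Unset Printing Implicit Defensive.
Import Order.TTheory GRing.Theory Num.Theory.
Local Open Scope ring_scope.

(* Labels of the 3k points of X: (0,j) = A_j, (1,j) = B_j, (2,j) = C_j. *)
Definition label (k : nat) := ('I_3 * 'I_k)%type.

Definition ebasis (R : realType) (k : nat) (j : 'I_k) : 'rV[R]_k := delta_mx 0 j.

(* the points of X in R^(2k) = R^(k+k); n = 2k-1 *)
Definition pt (R : realType) (k : nat) (l : label k) : 'rV[R]_(k + k) :=
  let j := l.2 in
  match val l.1 with
  | 0 => row_mx (@ebasis R k j) 0
  | 1 => ((2 * (2 * k - 1))%N%:R)^-1 *:
           row_mx (const_mx 2 - @ebasis R k j) (const_mx 2 - @ebasis R k j)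
  | _ => row_mx 0 (@ebasis R k j)
  end.

Definition hull (R : realType) (k : nat) (S : {set label k}) : set 'rV[R]_(k + k) :=
  [set x | exists w : label k -> R,
     [/\ (forall l, 0 <= w l), (forall l, l \notin S -> w l = 0),
         \sum_l w l = 1 & x = \sum_l w l *: @pt R k l]].

(* A ∪ C, whose hull is the standard simplex Delta_0 *)
Definition ACset (k : nat) : {set label k} := [set l : label k | val l.1 != 1%N].

Definition good (k : nat) (S : {set label k}) : bool :=
  [&& #|S| == (2 * k)%N,
      [forall j : 'I_k, ~~ [forall i : 'I_3, (i, j) \in S]]
    & S != ACset k].

Definition face_of (R : realType) (k : nat) (F : set 'rV[R]_(k + k))
  (S : {set label k}) : Prop :=
  exists T : {set label k}, T \subset S /\ @hull R k T = F.
Arguments good {k} S.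

(* Main.v *)
Require Import Defs.
From HB Require Import structures.
From mathcomp Require Import all_boot all_order all_algebra.
From mathcomp Require Import boolp classical_sets reals.
From mathcomp Require Import ring lra zify.

Module Helpers.
Import Order.TTheory GRing.Theory Num.Theory.
Local Open Scope ring_scope.
Local Set Implicit Arguments.
Local Unset Strict Implicit.


Definition Lf (R : realType) (k : nat) (al ga : 'I_k -> R) (x : 'rV[R]_(k+k)) : R :=
  \sum_(i < k) (al i * x 0 (lshift k i) + ga i * x 0 (rshift k i)).

Arguments Lf {R k}.
Lemma Lf_sum (R : realType) k al ga (w : label k -> R) :
  Lf al ga (\sum_l w l *: pt R k l) = \sum_l w l * Lf al ga (pt R k l).
Proof.
rewrite /Lf.
under eq_bigr => i _ do rewrite !summxE.
under [RHS]eq_bigr => l _ do rewrite mulr_sumr.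
rewrite exchange_big /=; apply: eq_bigr => i _.
rewrite mulr_sumr mulr_sumr -big_split /=; apply: eq_bigr => l _.
rewrite !mxE; ring.
Qed.

Definition a0 : 'I_3 := @Ordinal 3 0 isT.
Definition a1 : 'I_3 := @Ordinal 3 1 isT.
Definition a2 : 'I_3 := @Ordinal 3 2 isT.

Lemma ord3P (i : 'I_3) : [\/ i = a0, i = a1 | i = a2].
Proof.
case: i => [[|[|[|m]]] Hm].
- by apply: Or31; apply: val_inj.
- by apply: Or32; apply: val_inj.
- by apply: Or33; apply: val_inj.
- by [].
Qed.

Definition NN (R : realType) (k : nat) : R := ((2 * (2 * k - 1))%N%:R).
Definition TT (R : realType) k (al ga : 'I_k -> R) := \sum_i (al i + ga i).
Arguments TT {R k}.

Lemma LfA (R : realType) k al ga j : Lf al ga (pt R k (a0, j)) = al j.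
Proof.
rewrite /Lf /pt /=.
under eq_bigr => i _ do rewrite row_mxEl row_mxEr !mxE /= eq_sym.
rewrite (bigD1 j) //= eqxx big1 ?addr0; first by rewrite mulr1 mulr0 addr0.
by move=> i Hi; rewrite eq_sym (negbTE Hi) !mulr0 addr0.
Qed.

Lemma LfC (R : realType) k al ga j : Lf al ga (pt R k (a2, j)) = ga j.
Proof.
rewrite /Lf /pt /=.
under eq_bigr => i _ do rewrite row_mxEl row_mxEr !mxE /= eq_sym.
rewrite (bigD1 j) //= eqxx big1 ?addr0; first by rewrite mulr1 mulr0 add0r.
by move=> i Hi; rewrite eq_sym (negbTE Hi) !mulr0 addr0.
Qed.

Lemma LfB (R : realType) k al ga j : Lf al ga (pt R k (a1, j)) =
   (NN R k)^-1 * (2 * TT al ga - (al j + ga j)).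
Proof.
rewrite /Lf /pt /TT /NN /=.
under eq_bigr => i _ do rewrite [X in al i * X]mxE [X in ga i * X]mxE row_mxEl row_mxEr !mxE /= eq_sym.
set c := (2 * (2 * k - 1))%:R^-1.
transitivity (\sum_(i < k) ((c * 2) * (al i + ga i) - c * ((j == i)%:R * (al i + ga i)))).
  by apply: eq_bigr => i _; ring.
rewrite sumrB -!mulr_sumr [X in _ - c * X](bigD1 j) //= eqxx.
rewrite [X in _ - c * (_ + X)]big1; last first.
  by move=> i Hi; rewrite eq_sym (negbTE Hi) mul0r.
rewrite addr0 mul1r; ring.
Qed.


Definition offa (R : realType) k (S : {set label k}) (i : 'I_k) : R :=
  if (a0, i) \notin S then 2 else 0.
Definition offg (R : realType) k (S : {set label k}) (i : 'I_k) : R :=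
  if (a0, i) \notin S then 0 else if (a2, i) \notin S then 2 else 0.
Definition cnd k (S : {set label k}) (i : 'I_k) := ((a0, i) \notin S) || ((a2, i) \notin S).
Arguments cnd {k}.
Definition mm k (S : {set label k}) j0 := #|[pred i | (i != j0) && cnd S i]|.
Arguments offa {R k}. Arguments mm {k}.
Arguments offg {R k}.

Lemma off_sum (R : realType) k (S : {set label k}) (j0 : 'I_k) :
  \sum_(i | i != j0) (offa S i + offg S i) = 2 * ((mm S j0)%:R) :> R.
Proof.
rewrite /mm.
transitivity (\sum_(i | i != j0) (if cnd S i then (2:R) else 0)).
  apply: eq_bigr => i _; rewrite /offa /offg /cnd.
  by case: ((a0,i) \in S) => /=; case: ((a2,i) \in S) => /=; rewrite ?addr0 ?add0r.
by rewrite -big_mkcondr sumr_const /= mulr_natr.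
Qed.

Definition noFull k (S : {set label k}) :=
  forall j, ~ [/\ (a0, j) \in S, (a1, j) \in S & (a2, j) \in S].

Arguments noFull {k}.
Lemma label_eta k (l : label k) : l = (l.1, l.2).
Proof. by case: l. Qed.

Definition alA (R : realType) k (S : {set label k}) (j0 : 'I_k) (i : 'I_k) : R :=
  if i == j0 then 0 else offa S i.
Definition gaA (R : realType) k (S : {set label k}) (j0 : 'I_k) (i : 'I_k) : R :=
  if i == j0 then 1 - 2 * (mm S j0)%:R else offg S i.
Definition alC (R : realType) k (S : {set label k}) (j0 : 'I_k) (i : 'I_k) : R :=
  if i == j0 then 1 - 2 * (mm S j0)%:R else offa S i.
Definition gaC (R : realType) k (S : {set label k}) (j0 : 'I_k) (i : 'I_k) : R :=
  if i == j0 then 0 else offg S i.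
Definition alB (R : realType) k (j0 : 'I_k) (i : 'I_k) : R := (i == j0)%:R.
Definition gaB (R : realType) k (j0 : 'I_k) (i : 'I_k) : R := - (i == j0)%:R.
Arguments alA {R k}. Arguments gaA {R k}. Arguments alC {R k}. Arguments gaC {R k}.
Arguments alB {R k}. Arguments gaB {R k}.

Lemma TT_A (R : realType) k (S : {set label k}) j0 : TT (@alA R k S j0) (gaA S j0) = 1.
Proof.
rewrite /TT (bigD1 j0) //= /alA /gaA eqxx.
under eq_bigr => i Hi do rewrite (negbTE Hi).
rewrite off_sum; ring.
Qed.

Lemma TT_C (R : realType) k (S : {set label k}) j0 : TT (@alC R k S j0) (gaC S j0) = 1.
Proof.
rewrite /TT (bigD1 j0) //= /alC /gaC eqxx.
under eq_bigr => i Hi do rewrite (negbTE Hi).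
rewrite off_sum; ring.
Qed.

Lemma TT_B (R : realType) k j0 : TT (@alB R k j0) (gaB j0) = 0.
Proof.
by rewrite /TT big1 // => i _; rewrite /alB /gaB subrr.
Qed.

Lemma offB0 (R : realType) k (S : {set label k}) i :
  noFull S -> (a1, i) \in S -> 2 - (offa S i + offg S i) = 0 :> R.
Proof.
move=> nf Hb; rewrite /offa /offg.
case H0: ((a0,i) \in S) => /=; last by rewrite addr0 subrr.
case H2: ((a2,i) \in S) => /=; last by rewrite add0r subrr.
by case: (nf i).
Qed.

Lemma vanA (R : realType) k (S : {set label k}) j0 (l : label k) : noFull S -> l \in S -> l.2 != j0 ->
  Lf (@alA R k S j0) (gaA S j0) (pt R k l) = 0.
Proof.
move=> nf; rewrite (label_eta l); case: l => [x i] /= Hl Hi.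
case: (ord3P x) => -> in Hl *.
- by rewrite LfA /alA (negbTE Hi) /offa Hl.
- rewrite LfB TT_A /alA /gaA (negbTE Hi) mulr1 (offB0 _ nf Hl).
  by rewrite mulr0.
- rewrite LfC /gaA (negbTE Hi) /offg Hl /=.
  by case: ((a0, i) \in S).
Qed.

Lemma vanC (R : realType) k (S : {set label k}) j0 (l : label k) : noFull S -> l \in S -> l.2 != j0 ->
  Lf (@alC R k S j0) (gaC S j0) (pt R k l) = 0.
Proof.
move=> nf; rewrite (label_eta l); case: l => [x i] /= Hl Hi.
case: (ord3P x) => -> in Hl *.
- by rewrite LfA /alC (negbTE Hi) /offa Hl.
- rewrite LfB TT_C /alC /gaC (negbTE Hi) mulr1 (offB0 _ nf Hl).
  by rewrite mulr0.
- rewrite LfC /gaC (negbTE Hi) /offg Hl /=.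
  by case: ((a0, i) \in S).
Qed.

Lemma vanB (R : realType) k j0 (l : label k) : l.2 != j0 ->
  Lf (@alB R k j0) (gaB j0) (pt R k l) = 0.
Proof.
rewrite (label_eta l); case: l => [x i] /= Hi.
case: (ord3P x) => ->.
- by rewrite LfA /alB (negbTE Hi).
- by rewrite LfB TT_B /alB /gaB (negbTE Hi) oppr0 !addr0 mulr0 subrr mulr0.
- by rewrite LfC /gaB (negbTE Hi) oppr0.
Qed.

Lemma NN_gt0 (R : realType) k : (1 <= k)%N -> 0 < NN R k.
Proof.
move=> hk; rewrite /NN ltr0n muln_gt0 /=.
by rewrite subn_gt0; lia.
Qed.



Lemma mm_pos k (S : {set label k}) j0 i : noFull S -> i != j0 -> (a1, i) \in S ->
  (0 < mm S j0)%N.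
Proof.
move=> nf Hi Hb; rewrite /mm; apply/card_gt0P; exists i.
rewrite inE /= Hi /= /cnd.
case H0: ((a0,i) \in S) => //=; case H2: ((a2,i) \in S) => //=.
by case: (nf i).
Qed.

Lemma one_m2 (R : realType) (m : nat) : 1 - 2 * m%:R != 0 :> R.
Proof.
case: m => [|m]; first by rewrite mulr0 subr0 oner_eq0.
rewrite subr_eq0; apply/eqP => h.
have : (1 : R) < 2 * m.+1%:R.
  by rewrite -natrM ltr1n; lia.
by rewrite -h ltxx.
Qed.

Lemma posneg (R : realType) (c m : R) : 0 < c -> 1 <= m ->
  (c * (2 - (1 - 2 * m))) * (1 - 2 * m) < 0 /\ (1 - 2 * m) * (c * (2 - (1 - 2 * m))) < 0.
Proof.
move=> hc hm.
have p : 0 < c * (2 - (1 - 2 * m)) by apply: mulr_gt0 => //; lra.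
by rewrite pmulr_rlt0 // pmulr_llt0 //; split; lra.
Qed.

Lemma core (R : realType) k (hk : (2 <= k)%N) (S : {set label k}) j0 (x : 'I_3) :
  noFull S -> exists al ga : 'I_k -> R,
 [/\ forall l, l \in S -> l.2 != j0 -> Lf al ga (pt R k l) = 0,
     Lf al ga (pt R k (x,j0)) = 0,
     forall z, z != x -> Lf al ga (pt R k (z,j0)) != 0
   & (x = a1 \/ exists i, i != j0 /\ (a1,i) \in S) ->
       forall z1 z2, z1 != x -> z2 != x -> z1 != z2 ->
          Lf al ga (pt R k (z1,j0)) * Lf al ga (pt R k (z2,j0)) < 0 ].
Proof.
move=> nf.
have hN := @NN_gt0 R k (ltnW hk).
have hNi : 0 < (NN R k)^-1 by rewrite invr_gt0.
case: (ord3P x) => ->.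
- exists (alA S j0), (gaA S j0); split.
  + by move=> l Hl Hj; apply: vanA.
  + by rewrite LfA /alA eqxx.
  + move=> z; case: (ord3P z) => -> // _.
    * rewrite LfB TT_A /alA /gaA eqxx add0r mulf_neq0 //; first by rewrite invr_eq0 gt_eqF.
      rewrite mulr1 opprB addrA; apply: lt0r_neq0.
      have : 0 <= (mm S j0)%:R :> R by [].
      lra.
    * by rewrite LfC /gaA eqxx one_m2.
  + case=> [//|[i [Hi Hb]]].
    have hm := mm_pos nf Hi Hb.
    have hm1 : (1 : R) <= (mm S j0)%:R by rewrite ler1n.
    move=> z1 z2; case: (ord3P z1) => ->; case: (ord3P z2) => -> //= _ _ _;
    rewrite ?LfA ?LfB ?LfC ?TT_A /alA /gaA ?eqxx ?add0r ?mulr1; have [? ?] := posneg hNi hm1; done.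
- exists (alB j0), (gaB j0); split.
  + by move=> l Hl Hj; apply: vanB.
  + by rewrite LfB TT_B /alB /gaB eqxx subrr mulr0 subr0 mulr0.
  + move=> z; case: (ord3P z) => -> // _.
    * by rewrite LfA /alB eqxx oner_eq0.
    * by rewrite LfC /gaB eqxx oppr_eq0 oner_eq0.
  + move=> _ z1 z2; case: (ord3P z1) => ->; case: (ord3P z2) => -> //= _ _ _;
    rewrite ?LfA ?LfC /alB /gaB eqxx ?mulrN1 ?mulN1r ?opprK ltrN10 //.
- exists (alC S j0), (gaC S j0); split.
  + by move=> l Hl Hj; apply: vanC.
  + by rewrite LfC /gaC eqxx.
  + move=> z; case: (ord3P z) => -> // _.
    * by rewrite LfA /alC eqxx one_m2.
    * rewrite LfB TT_C /alC /gaC eqxx addr0 mulf_neq0 //; first by rewrite invr_eq0 gt_eqF.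
      rewrite mulr1 opprB addrA; apply: lt0r_neq0.
      have : 0 <= (mm S j0)%:R :> R by [].
      lra.
  + case=> [//|[i [Hi Hb]]].
    have hm := mm_pos nf Hi Hb.
    have hm1 : (1 : R) <= (mm S j0)%:R by rewrite ler1n.
    move=> z1 z2; case: (ord3P z1) => ->; case: (ord3P z2) => -> //= _ _ _;
    rewrite ?LfA ?LfB ?LfC ?TT_C /alC /gaC ?eqxx ?addr0 ?mulr1; have [? ?] := posneg hNi hm1; done.
Qed.


Lemma third (a b : 'I_3) : a != b -> exists c, [/\ c != a, c != b &
  forall z, z != a -> z != b -> z = c].
Proof.
case: (ord3P a) => ->; case: (ord3P b) => -> // _.
- by exists a2; split => // z; case: (ord3P z) => ->.
- by exists a1; split => // z; case: (ord3P z) => ->.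
- by exists a2; split => // z; case: (ord3P z) => ->.
- by exists a0; split => // z; case: (ord3P z) => ->.
- by exists a1; split => // z; case: (ord3P z) => ->.
- by exists a0; split => // z; case: (ord3P z) => ->.
Qed.

Lemma good_noFull k (S : {set label k}) : good S -> noFull S.
Proof.
case/and3P => _ /forallP nf _ j [h0 h1 h2].
move: (nf j) => /negP; apply; apply/forallP => i.
by case: (ord3P i) => ->.
Qed.

Lemma missing k (S : {set label k}) j : noFull S -> exists y, (y, j) \notin S.
Proof.
move=> nf; case H0: ((a0, j) \in S); last by exists a0; rewrite H0.
case H1: ((a1, j) \in S); last by exists a1; rewrite H1.
case H2: ((a2, j) \in S); last by exists a2; rewrite H2.
by case: (nf j).
Qed.

Lemma TT_K (R : realType) k (j : 'I_k) :
  TT (fun i => (i == j)%:R) (fun _ => 0) = 1 :> R.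
Proof.
rewrite /TT (bigD1 j) //= eqxx big1 ?addr0 //.
by move=> i Hi; rewrite (negbTE Hi) addr0.
Qed.

Lemma pt_inj (R : realType) k (hk : (2 <= k)%N) : injective (pt R k).
Proof.
move=> [x j] [y j'] E.
have F : forall al ga, Lf al ga (pt R k (x, j)) = Lf al ga (pt R k (y, j')) by move=> al ga; rewrite E.
have hN := @NN_gt0 R k (ltnW hk).
have hNi : (NN R k)^-1 != 0 by rewrite invr_eq0 gt_eqF.
have hNp : 0 < (NN R k)^-1 by rewrite invr_gt0.
move: (F (alB j) (gaB j)) (F (alB j') (gaB j')) (F (fun i => (i == j)%:R) (fun _ => 0)).
case: (eqVneq j' j) => [->|Hne].
  case: (ord3P x) => ->; case: (ord3P y) => -> //;
  rewrite ?LfA ?LfB ?LfC ?TT_B ?TT_K /alB /gaB ?eqxx /= ?mulr1n ?mulr0n ?oppr0;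
  move=> h1 h2 h3; clear E F; exfalso; lra.
have Hne' : (j == j') = false by rewrite eq_sym (negbTE Hne).
case: (ord3P x) => ->; case: (ord3P y) => -> //;
  rewrite ?LfA ?LfB ?LfC ?TT_B ?TT_K /alB /gaB ?eqxx ?(negbTE Hne) ?Hne' /= ?mulr1n ?mulr0n ?oppr0;
  move=> h1 h2 h3; clear E F; exfalso; lra.
Qed.

Lemma sep (R : realType) k (hk : (2 <= k)%N) (S : {set label k}) l :
  noFull S -> l \in S -> exists al ga : 'I_k -> R,
   (forall l', l' \in S -> l' != l -> Lf al ga (pt R k l') = 0) /\ Lf al ga (pt R k l) != 0.
Proof.
move=> nf Hl.
have [y Hy] := missing l.2 nf.
have Hyl : l.1 != y.
  by apply/eqP => E; move: Hy; rewrite -E -label_eta Hl.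
have [x [Hx1 Hx2 Hx]] := third Hyl.
have [al [ga [V1 V2 V3 _]]] := core R hk l.2 x nf.
exists al, ga; split; last first.
  by rewrite (label_eta l) V3 // eq_sym.
move=> l' Hl' Hne.
case: (eqVneq l'.2 l.2) => Hj; last by apply: V1.
have -> : l' = (x, l.2).
  rewrite (label_eta l') Hj; congr pair; apply: Hx.
  - apply: contraNneq Hne => E; by rewrite (label_eta l') E Hj -label_eta.
  - apply: contraNneq Hy => E; by rewrite -E -Hj -label_eta.
exact: V2.
Qed.

Lemma hull_mono (R : realType) k (U V : {set label k}) x :
  U \subset V -> hull R k U x -> hull R k V x.
Proof.
move=> sUV [w [w0 wS w1 wx]]; exists w; split => // l Hl.
by apply: wS; apply/negP => /(fintype.subsetP sUV); rewrite (negbTE Hl).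
Qed.

Lemma pt_hull (R : realType) k (U : {set label k}) l : l \in U -> hull R k U (pt R k l).
Proof.
move=> Hl; exists (fun l' => (l' == l)%:R); split.
- by move=> l'; case: (l' == l).
- by move=> l' Hl'; case: eqP Hl' => // ->; rewrite Hl.
- by rewrite (bigD1 l) //= eqxx big1 ?addr0 // => i /negbTE ->.
- rewrite (bigD1 l) //= eqxx scale1r big1 ?addr0 // => i /negbTE ->.
  by rewrite scale0r.
Qed.

Lemma Lf_hull (R : realType) k al ga (U : {set label k}) (w : label k -> R) :
  (forall l, l \notin U -> w l = 0) ->
  Lf al ga (\sum_l w l *: pt R k l) = \sum_(l in U) w l * Lf al ga (pt R k l).
Proof.
move=> wU; rewrite Lf_sum (bigID (fun l => l \in U)) /= addrC big1 ?add0r //.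
by move=> l Hl; rewrite wU ?mul0r.
Qed.

Lemma Lf_hull1 (R : realType) k al ga (S U : {set label k}) (w : label k -> R) l :
  U \subset S -> l \in U ->
  (forall l', l' \in S -> l' != l -> Lf al ga (pt R k l') = 0) ->
  (forall l, l \notin U -> w l = 0) ->
  Lf al ga (\sum_l w l *: pt R k l) = w l * Lf al ga (pt R k l).
Proof.
move=> sUS Hl V wU; rewrite (Lf_hull _ _ wU) (bigD1 l) //= big1 ?addr0 //.
move=> u /andP [Hu Hne]; rewrite V ?mulr0 //.
exact: (fintype.subsetP sUS).
Qed.

Lemma vert (R : realType) k (hk : (2 <= k)%N) (S U T : {set label k}) :
  noFull S -> U \subset S -> hull R k T = hull R k U -> U \subset T.
Proof.
move=> nf sUS eTU; apply/fintype.subsetP => l Hl.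
apply/negPn/negP => HlT.
have HlS : l \in S by exact: (fintype.subsetP sUS).
have [al [ga [V Vl]]] := sep R hk nf HlS.
set c := Lf al ga (pt R k l) in Vl.
have K : forall t, t \in T -> Lf al ga (pt R k t) / c < 1.
  move=> t Ht.
  have Htl : t != l by apply: contraNneq HlT => <-.
  have : hull R k U (pt R k t) by rewrite -eTU; exact: pt_hull.
  case=> v [v0 vU v1 vx].
  rewrite vx (Lf_hull1 sUS Hl V vU) -/c mulfK //.
  move: v1; rewrite (bigD1 l) //= => v1.
  have s0 : 0 <= \sum_(i | i != l) v i by apply: sumr_ge0.
  rewrite lt_neqAle; apply/andP; split; last by lra.
  apply/eqP => vl1.
  have s00 : \sum_(i | i != l) v i = 0 by lra.
  have := psumr_eq0P (fun i _ => v0 i) s00 => vz.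
  move/eqP: Htl; apply; apply: (@pt_inj R k hk).
  rewrite vx (bigD1 l) //= vl1 scale1r big1 ?addr0 // => i Hi.
  by rewrite vz // scale0r.
have : hull R k T (pt R k l) by rewrite eTU; exact: pt_hull.
case=> w [w0 wT w1 wx].
have E1 : c = \sum_(t in T) w t * Lf al ga (pt R k t).
  by rewrite /c {1}wx (Lf_hull _ _ wT).
have E2 : \sum_(t in T) w t = 1.
  by rewrite -w1 [RHS](bigID (fun l => l \in T)) /= [X in _ = _ + X]big1 ?addr0 // => i /wT.
have E3 : \sum_(t in T) w t * (1 - Lf al ga (pt R k t) / c) = 0.
  under eq_bigr => t _ do rewrite mulrBr mulr1 mulrA.
  by rewrite sumrB E2 -mulr_suml -E1 mulfV // subrr.
have nn : forall t, t \in T -> 0 <= w t * (1 - Lf al ga (pt R k t) / c).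
  move=> t Ht; apply: mulr_ge0 => //; have := K t Ht; lra.
have Z := psumr_eq0P nn E3.
have : \sum_(t in T) w t = 0.
  rewrite big1 // => t Ht.
  have := Z t Ht.
  have := K t Ht.
  move=> Kt /eqP; rewrite mulf_eq0 => /orP [/eqP //|].
  by rewrite subr_eq0 => /eqP h; move: Kt; rewrite -h ltxx.
by rewrite E2 => /eqP; rewrite oner_eq0.
Qed.

Lemma sum3 (F : 'I_3 -> nat) : (\sum_(i < 3) F i = F a0 + F a1 + F a2)%N.
Proof.
rewrite !big_ord_recl big_ord0 addn0 addnA.
by congr (F _ + F _ + F _); apply: val_inj.
Qed.

Lemma card_cols k (S : {set label k}) :
  #|S| = (\sum_(j < k) \sum_(i < 3) ((i, j) \in S : nat))%N.
Proof.
rewrite -sum1_card big_mkcond /= exchange_big /=.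
rewrite pair_big /=; apply: eq_bigr => [[i j]] _ /=.
by case: ((i,j) \in S).
Qed.

Lemma col_uniq k (S : {set label k}) j y1 y2 : good S ->
  (y1, j) \notin S -> (y2, j) \notin S -> y1 = y2.
Proof.
move=> gS H1 H2; apply/eqP/negPn/negP => Hne.
have nf := good_noFull gS.
case/and3P: gS => /eqP cS _ _.
have cj : (\sum_(i < 3) ((i, j) \in S : nat) <= 1)%N.
  rewrite sum3.
  move: Hne H1 H2; case: (ord3P y1) => ->; case: (ord3P y2) => -> // _ /negbTE -> /negbTE -> /=;
  by case: (_ \in S).
have ci : forall i, (\sum_(x < 3) ((x, i) \in S : nat) <= 2)%N.
  move=> i; rewrite sum3.
  case H0: ((a0,i) \in S); case H1': ((a1,i) \in S); case H2': ((a2,i) \in S) => //.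
  by case: (nf i).
have : (#|S| <= 1 + 2 * (k - 1))%N.
  rewrite card_cols (bigD1 j) //=; apply: leq_add => //.
  apply: leq_trans (_ : (\sum_(i < k | i != j) 2 <= _)%N).
    by apply: leq_sum => i _.
  rewrite sum_nat_const cardC1 card_ord mulnC; lia.
have : (1 <= k)%N by case: (k) (j) => [[]|].
rewrite cS; lia.
Qed.


Lemma lem2k k : (2 <= k)%N -> (2 * k - 1).+1 = (2 * k)%N.
Proof. lia. Qed.

Lemma lemD k : (2 <= k)%N -> (0 < 2 * k - (2 * k - 1))%N.
Proof. lia. Qed.

Lemma lemD1 k c : (2 * k)%N = (true + c)%N -> (c <= 2 * k - 1)%N.
Proof. rewrite /=; lia. Qed.

Lemma zero_of_opp (R : realType) (w1 w2 A B : R) : 0 <= w1 -> 0 <= w2 -> A * B < 0 ->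
  w1 * A = w2 * B -> w1 = 0.
Proof.
move=> h1 h2 hAB e.
have hA : A != 0 by apply: contraTneq hAB => ->; rewrite mul0r ltxx.
have AA : 0 < A ^+ 2 by rewrite exprn_even_gt0 //= hA.
have h : w1 * A ^+ 2 = w2 * (A * B) by rewrite expr2 mulrA e; ring.
have : w1 * A ^+ 2 <= 0 by rewrite h; apply: mulr_ge0_le0 => //; apply: ltW.
rewrite pmulr_lle0 // => h3; apply/eqP; rewrite eq_le h3 h1.
by [].
Qed.

Lemma main_aux (R : realType) (k : nat) (hk : (2 <= k)%N)
  (S1 S' : {set label k}) :
  good S1 -> S' \subset S1 -> #|S'| = (2 * k - 1)%N ->
  ~ @face_of R k (@hull R k S') (ACset k) ->
  exists S2 : {set label k},
    [/\ good S2, @hull R k S2 <> @hull R k S1, @face_of R k (@hull R k S') S2,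
        (forall S3 : {set label k}, good S3 -> @face_of R k (@hull R k S') S3 ->
            @hull R k S3 = @hull R k S1 \/ @hull R k S3 = @hull R k S2)
      & (@hull R k S1 `&` @hull R k S2 = @hull R k (S1 :&: S2))%classic].
Proof.
move=> gS1 sS' cS' nface.
have nf1 := good_noFull gS1.
have cS1 : #|S1| = (2 * k)%N by case/and3P: gS1 => /eqP.
have [l0 Hl0] : exists l0, l0 \in S1 :\: S'.
  by apply/card_gt0P; rewrite cardsD (finset.setIidPr sS') cS1 cS' (lemD hk).
move: Hl0; rewrite inE => /andP [Hl0S' Hl0S1].
have eS' : S' = S1 :\ l0.
  apply/eqP; rewrite eqEcard; apply/andP; split.
    apply/fintype.subsetP => v Hv; rewrite !inE (fintype.subsetP sS' v Hv) andbT.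
    by apply: contraNneq Hl0S' => <-.
  by move: (cardsD1 l0 S1); rewrite Hl0S1 cS1 cS'; apply: lemD1.
have [b Hb Hb1] : exists2 b, b \in S' & b.1 = a1.
  case: (boolP [exists b, (b \in S') && (b.1 == a1)]).
    by case/existsP => b /andP [Hb /eqP Hb1]; exists b.
  move=> /existsPn Hn; exfalso; apply: nface; exists S'; split => //.
  apply/fintype.subsetP => v Hv; rewrite inE.
  apply/negP => /eqP Hv1; move: (Hn v); rewrite Hv /=.
  by have -> : v.1 = a1 by apply: val_inj.
set j0 := l0.2; set a := l0.1.
have [y Hy] := missing j0 nf1.
have Hay : a != y.
  by apply/eqP => E; move: Hy; rewrite -E /a /j0 -label_eta Hl0S1.
have [x [Hxa Hxy Hx]] := third Hay.
have HxS1 : (x, j0) \in S1.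
  apply/negPn/negP => Hx1; move/eqP: Hxy; apply; exact: col_uniq gS1 Hx1 Hy.
have el0 : l0 = (a, j0) by rewrite /a /j0 -label_eta.
set m0 : label k := (y, j0).
have Hm0S1 : m0 \notin S1 by [].
have Hm0S' : m0 \notin S'.
  by apply: contra Hm0S1; apply: (fintype.subsetP sS').
have Hl0m0 : l0 != m0 by rewrite el0 /m0; apply/eqP => [[E]]; move/eqP: Hay.
set S2 := m0 |: S'.
have Hl0S2 : l0 \notin S2 by rewrite !inE negb_or Hl0m0 Hl0S'.
have sS'2 : S' \subset S2 by apply: finset.subsetUr.
have colS' : forall l', l' \in S' -> l'.2 = j0 -> l'.1 = x.
  move=> l' Hl' Hj; apply: Hx.
  - apply: contraNneq Hl0S' => E; by rewrite el0 -E -Hj -label_eta.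
  - apply/eqP => E; move: Hy; by rewrite -E -Hj -label_eta (fintype.subsetP sS').
have gS2 : good S2.
  apply/and3P; split.
  - by rewrite cardsU1 Hm0S' cS' /= add1n (lem2k hk).
  - apply/forallP => j; apply/negP => /forallP H.
    case: (eqVneq j j0) => [Ej|Nj].
      by move: (H a); rewrite Ej -el0 (negbTE Hl0S2).
    have [y' Hy'] := missing j nf1.
    move: (H y'); rewrite !inE => /orP [/eqP [_ E]|Hin].
      by move/eqP: Nj.
    by move: Hy'; rewrite (fintype.subsetP sS' _ Hin).
  - apply/eqP => E; have : b \in S2 by rewrite !inE Hb orbT.
    by rewrite E inE Hb1.
exists S2; split => //.
- move=> E.
  have : S1 \subset S2 by exact: (vert hk nf1 (subxx S1) E).
  by move/fintype.subsetP/(_ l0 Hl0S1); rewrite (negbTE Hl0S2).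
- by exists S'; split.
- move=> S3 gS3 [T [sT eT]].
  have sS'T : S' \subset T by apply: (vert hk nf1 sS' eT).
  have sS'3 : S' \subset S3 by apply: fintype.subset_trans sT.
  have cS3 : #|S3| = (2 * k)%N by case/and3P: gS3 => /eqP.
  have [z Hz] : exists z, z \in S3 :\: S'.
    by apply/card_gt0P; rewrite cardsD (finset.setIidPr sS'3) cS3 cS' (lemD hk).
  move: Hz; rewrite inE => /andP [HzS' HzS3].
  have eS3 : S3 = z |: S'.
    apply/eqP; rewrite eq_sym eqEcard; apply/andP; split.
      by rewrite finset.subUset finset.sub1set HzS3 sS'3.
    by rewrite cardsU1 HzS' cS3 cS' /= add1n (lem2k hk).
  have Hzj : z.2 = j0.
    apply/eqP/negPn/negP => Nj.
    have nf3 := good_noFull gS3.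
    have HzS1 : z \notin S1.
      apply: contra HzS' => HzS1; rewrite eS' !inE HzS1 andbT.
      by apply: contra Nj => /eqP ->.
    have [y' Hy'] := missing z.2 nf1.
    apply: (nf3 z.2); split.
    + case: (boolP ((a0, z.2) \in S1)) => H.
        apply: (fintype.subsetP sS'3); rewrite eS' !inE H andbT.
        by apply: contra Nj => /eqP E; rewrite /j0 -E.
      have Ez : (z.1, z.2) \notin S1 by rewrite -(label_eta z).
      by rewrite (col_uniq gS1 H Ez) -(label_eta z).
    + case: (boolP ((a1, z.2) \in S1)) => H.
        apply: (fintype.subsetP sS'3); rewrite eS' !inE H andbT.
        by apply: contra Nj => /eqP E; rewrite /j0 -E.
      have Ez : (z.1, z.2) \notin S1 by rewrite -(label_eta z).
      by rewrite (col_uniq gS1 H Ez) -(label_eta z).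
    + case: (boolP ((a2, z.2) \in S1)) => H.
        apply: (fintype.subsetP sS'3); rewrite eS' !inE H andbT.
        by apply: contra Nj => /eqP E; rewrite /j0 -E.
      have Ez : (z.1, z.2) \notin S1 by rewrite -(label_eta z).
      by rewrite (col_uniq gS1 H Ez) -(label_eta z).
  have HxS' : (x, j0) \in S'.
    rewrite eS' !inE HxS1 andbT el0; apply/eqP => [[E]]; by move/eqP: Hxa.
  case: (eqVneq z.1 a) => Hza.
    left; congr (hull R k _); rewrite eS3 eS' (_ : z = l0); first by rewrite finset.setD1K.
    by rewrite el0 (label_eta z) Hza Hzj.
  case: (eqVneq z.1 y) => Hzy.
    right; congr (hull R k _); rewrite eS3 /S2 (_ : z = m0) //.
    by rewrite /m0 (label_eta z) Hzy Hzj.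
  exfalso; move: HzS'; rewrite (label_eta z) (Hx _ Hza Hzy) Hzj HxS'.
  by [].
- apply/seteqP; split => v; last first.
    by move=> H; split; apply: hull_mono H; [apply: finset.subsetIl | apply: finset.subsetIr].
  move=> [H1 H2].
  have cond : x = a1 \/ exists i, i != j0 /\ (a1, i) \in S1.
    case: (eqVneq b.2 j0) => Hbj.
      by left; rewrite -(colS' _ Hb Hbj).
    right; exists b.2; split => //; rewrite -Hb1 -(label_eta b).
    exact: (fintype.subsetP sS' _ Hb).
  have [al [ga [V1 V2 V3 V4]]] := @core R k hk S1 j0 x nf1.
  have VS' : forall l', l' \in S' -> Lf al ga (pt R k l') = 0.
    move=> l' Hl'; case: (eqVneq l'.2 j0) => Hj.
      by rewrite (label_eta l') (colS' _ Hl' Hj) Hj V2.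
    by apply: V1 => //; apply: (fintype.subsetP sS').
  have Hax : a != x by rewrite eq_sym.
  have Hyx : y != x by rewrite eq_sym.
  have sgn := V4 cond a y Hax Hyx Hay.
  rewrite -el0 -/m0 in sgn.
  case: H1 => w1 [w10 w1S w11 w1x].
  case: H2 => w2 [w20 w2S w21 w2x].
  have E1 : Lf al ga v = w1 l0 * Lf al ga (pt R k l0).
    rewrite w1x (Lf_hull1 (subxx S1) Hl0S1 _ w1S) // => l' Hl' Hne.
    by apply: VS'; rewrite eS' !inE Hne Hl'.
  have Hm0S2 : m0 \in S2 by rewrite !inE eqxx.
  have E2 : Lf al ga v = w2 m0 * Lf al ga (pt R k m0).
    rewrite w2x (Lf_hull1 (subxx S2) Hm0S2 _ w2S) // => l' Hl' Hne.
    by apply: VS'; move: Hl'; rewrite !inE (negbTE Hne).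
  have w0 : w1 l0 = 0.
    apply: (zero_of_opp (w10 l0) (w20 m0) sgn); by rewrite -E1 -E2.
  exists w1; split => // l Hl.
  case: (boolP (l \in S1)) => HS1; last by apply: w1S.
  case: (eqVneq l l0) => [->//|Hne].
  exfalso; move: Hl; rewrite !inE HS1 /=.
  have : l \in S' by rewrite eS' !inE Hne HS1.
  by move=> ->; rewrite orbT.
Qed.

End Helpers.

Local Open Scope classical_set_scope.

Theorem mainTheorem7 (R : realType) (k : nat) (hk : (2 <= k)%N)
  (S1 S' : {set label k}) :
  good S1 -> S' \subset S1 -> #|S'| = (2 * k - 1)%N ->
  ~ @face_of R k (@hull R k S') (ACset k) ->
  exists S2 : {set label k},
    [/\ good S2, @hull R k S2 <> @hull R k S1, @face_of R k (@hull R k S') S2,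
        (forall S3 : {set label k}, good S3 -> @face_of R k (@hull R k S') S3 ->
            @hull R k S3 = @hull R k S1 \/ @hull R k S3 = @hull R k S2)
      & @hull R k S1 `&` @hull R k S2 = @hull R k (S1 :&: S2)].
Proof.
exact: (@Helpers.main_aux R k hk S1 S').
Qed.
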